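(* Let $(f_t(x))_{t\in[0,1]}$ be a smooth family of strictly positive probability densities on $\mathbb R$, and suppose there exist a constant $v$ and a non-decreasing continuously differentiable function $\alpha:[0,1]\to\mathbb R$ such that, with $$g_t(x):=vf_t(x)+\alpha(t)\frac{\partial f_t}{\partial x}(x),$$ we have $\frac{\partial f_t}{\partial t}=-\frac{\partial g_t}{\partial x}$. Let $$h_t(x):=v^2f_t(x)+2v\alpha(t)\frac{\partial f_t}{\partial x}(x)+\alpha(t)^2\frac{\partial^2 f_t}{\partial x^2}(x)-\alpha'(t)f_t(x).$$ Assume the following technical conditions: (a) there exist integrable $\theta_A,\theta_B$ with $\left|\frac{\partial g_t}{\partial x}(1+\log f_t)\right|\le\theta_A(x)$ and $\left|\frac{\partial^2 h_t}{\partial x^2}\log f_t+\left(\frac{\partial g_t}{\partial x}\right)^2\frac1{f_t}\right|\le\theta_B(x)$ for all $t,x$; (b) for each $t$ the functions $g_t$, $\frac{\partial h_t}{\partial x}\log f_t$, $\frac{h_t}{f_t}\frac{\partial f_t}{\partial x}$, $\left(\frac{g_t}{f_t}\right)^2\frac{\partial f_t}{\partial x}$ vanish as $x\to\pm\infty$; and the entropy $H(t)=-\int f_t\log f_t\,dx$ exists for all $t$. Then $H$ is a concave function of $t$ on $[0,1]$. *)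

(* Defs.v *)
From Stdlib Require Import Reals Lra Classical ClassicalEpsilon.
Open Scope R_scope.

(* Classical derivative operator: the derivative of f at x if it exists, 0 otherwise. *)
Definition deriv (f : R -> R) (x : R) : R :=
  match excluded_middle_informative (exists l, derivable_pt_lim f x l) with
  | left H => proj1_sig (constructive_indefinite_description _ H)
  | right _ => 0
  end.

Definition pt (F : R -> R -> R) (t x : R) : R := deriv (fun s => F s x) t.
Definition px (F : R -> R -> R) (t x : R) : R := deriv (fun y => F t y) x.

Definition cont2 (F : R -> R -> R) : Prop :=
  forall t x eps, 0 < eps -> exists delta, 0 < delta /\
    forall s y, Rabs (s - t) < delta -> Rabs (y - x) < delta ->
      Rabs (F s y - F t x) < eps.

(* C^infinity on R^2: jointly continuous, both partials exist everywhere,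
   and the partials are again C^infinity. *)
CoInductive smooth2 : (R -> R -> R) -> Prop :=
| Smooth2 : forall F : R -> R -> R,
    cont2 F ->
    (forall t x, derivable_pt_lim (fun s => F s x) t (pt F t x)) ->
    (forall t x, derivable_pt_lim (fun y => F t y) x (px F t x)) ->
    smooth2 (pt F) -> smooth2 (px F) -> smooth2 F.

Definition C1_on_R (a : R -> R) : Prop :=
  (forall t, derivable_pt_lim a t (deriv a t)) /\ continuity (deriv a).

(* Integrability over R (absolute, improper Riemann): locally Riemann
   integrable, and the integrals of |f| over bounded intervals are bounded. *)
Definition integrable_R (f : R -> R) : Prop :=
  (forall a b, inhabited (Riemann_integrable f a b)) /\
  exists M, forall a b (pr : Riemann_integrable (fun x => Rabs (f x)) a b),
    a <= b -> RiemannInt pr <= M.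

Definition integral_R (f : R -> R) (l : R) : Prop :=
  forall eps, 0 < eps -> exists M, forall a b (pr : Riemann_integrable f a b),
    a <= - M -> M <= b -> Rabs (RiemannInt pr - l) < eps.

Definition vanishes_at_infty (phi : R -> R) : Prop :=
  forall eps, 0 < eps -> exists M, forall x, M <= Rabs x -> Rabs (phi x) < eps.

Definition concave_on_01 (H : R -> R) : Prop :=
  forall s t l, 0 <= s <= 1 -> 0 <= t <= 1 -> 0 <= l <= 1 ->
    l * H s + (1 - l) * H t <= H (l * s + (1 - l) * t).

(* Main.v *)
Require Import Defs.
From Stdlib Require Import Reals Lra.
From Coquelicot Require Import Coquelicot.
From Stdlib Require Import FunctionalExtensionality Classical ClassicalEpsilon.
Open Scope R_scope.

Lemma deriv_eq (F : R -> R) x l : derivable_pt_lim F x l -> deriv F x = l.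
Proof.
  intro H. unfold deriv.
  destruct (excluded_middle_informative _) as [e|n].
  - destruct (constructive_indefinite_description _ e) as [l' Hl']. simpl.
    exact (uniqueness_limite F x l' l Hl' H).
  - exfalso; apply n; eauto.
Qed.

Lemma Derive_eq (F : R -> R) x l : derivable_pt_lim F x l -> Derive F x = l.
Proof. intro H. apply is_derive_unique. apply is_derive_Reals. exact H. Qed.

Lemma smooth_inv F : smooth2 F ->
  cont2 F /\ (forall t x, derivable_pt_lim (fun s => F s x) t (pt F t x)) /\
  (forall t x, derivable_pt_lim (fun y => F t y) x (px F t x)) /\
  smooth2 (pt F) /\ smooth2 (px F).
Proof. intro H; inversion H; subst; tauto. Qed.

Lemma cont2_2d F t x : cont2 F -> continuity_2d_pt F t x.
Proof.
  intros H eps. destruct (H t x eps (cond_pos eps)) as [d [Hd Hd']].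
  exists (mkposreal d Hd). intros u v Hu Hv. apply Hd'; assumption.
Qed.

Lemma cont2_x F t x : cont2 F -> continuity_pt (fun y => F t y) x.
Proof.
  intros H. apply continuity_pt_filterlim. intros P [eps HP].
  destruct (H t x eps (cond_pos eps)) as [d [Hd Hd']].
  exists (mkposreal d Hd). intros y Hy. apply HP. apply Hd'.
  rewrite Rminus_diag, Rabs_R0; exact Hd. exact Hy.
Qed.

Section Sm.
Variable F : R -> R -> R.
Hypothesis HF : smooth2 F.
Lemma sm_c : cont2 F. Proof. apply smooth_inv in HF; tauto. Qed.
Lemma sm_pt : smooth2 (pt F). Proof. apply smooth_inv in HF; tauto. Qed.
Lemma sm_px : smooth2 (px F). Proof. apply smooth_inv in HF; tauto. Qed.
Lemma sm_dx t x : derivable_pt_lim (fun y => F t y) x (px F t x).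
Proof. apply smooth_inv in HF; apply HF. Qed.
Lemma sm_dt t x : derivable_pt_lim (fun s => F s x) t (pt F t x).
Proof. apply smooth_inv in HF; apply HF. Qed.
Lemma sm_idx t x : is_derive (fun y => F t y) x (px F t x).
Proof. apply is_derive_Reals, sm_dx. Qed.
Lemma sm_idt t x : is_derive (fun s => F s x) t (pt F t x).
Proof. apply is_derive_Reals, sm_dt. Qed.
Lemma sm_Dx t x : Derive (fun y => F t y) x = px F t x.
Proof. apply Derive_eq, sm_dx. Qed.
Lemma sm_Dt t x : Derive (fun s => F s x) t = pt F t x.
Proof. apply Derive_eq, sm_dt. Qed.
Lemma sm_ex t x : ex_derive (fun y => F t y) x.
Proof. eexists; apply sm_idx. Qed.
Lemma sm_et t x : ex_derive (fun s => F s x) t.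
Proof. eexists; apply sm_idt. Qed.

Lemma sm_schwarz t x : pt (px F) t x = px (pt F) t x.
Proof.
  pose proof sm_px as H1. pose proof sm_pt as H2.
  assert (E1 : forall z w, Derive (fun y => F z y) w = px F z w) by (intros; apply sm_Dx).
  assert (E2 : forall z w, Derive (fun y => F y w) z = pt F z w) by (intros; apply sm_Dt).
  pose proof (Schwarz F t x) as S.
  assert (A1 : (fun z => Derive (fun w => F z w) x) = (fun z => px F z x))
    by (apply functional_extensionality; intro; apply E1).
  assert (A2 : (fun z => Derive (fun w => F w z) t) = (fun z => pt F t z))
    by (apply functional_extensionality; intro; apply E2).
  rewrite A1, A2 in S.
  rewrite <- (Derive_eq _ _ _ (proj1 (proj2 (proj2 (smooth_inv _ H2))) t x)).
  rewrite <- (Derive_eq _ _ _ (proj1 (proj2 (smooth_inv _ H1)) t x)).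
  apply S.
  - exists (mkposreal 1 Rlt_0_1). intros u v _ _. split; [|split;[|split]].
    + eexists; apply is_derive_Reals, sm_dt.
    + eexists; apply is_derive_Reals, sm_dx.
    + assert (A3 : (fun z => Derive (fun w => F z w) v) = (fun z => px F z v))
        by (apply functional_extensionality; intro; apply E1).
      rewrite A3. eexists; apply is_derive_Reals, (proj1 (proj2 (smooth_inv _ H1))).
    + assert (A3 : (fun z => Derive (fun w => F w z) u) = (fun z => pt F u z))
        by (apply functional_extensionality; intro; apply E2).
      rewrite A3. eexists; apply is_derive_Reals, (proj1 (proj2 (proj2 (smooth_inv _ H2)))).
  - apply continuity_2d_pt_ext with (f := pt (px F)).
    + intros u v. assert (A3 : (fun z => Derive (fun w => F z w) v) = (fun z => px F z v))
        by (apply functional_extensionality; intro; apply E1).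
      rewrite A3. symmetry. apply Derive_eq, (proj1 (proj2 (smooth_inv _ H1))).
    + apply cont2_2d. apply (smooth_inv _ (proj1 (proj2 (proj2 (proj2 (smooth_inv _ H1)))))).
  - apply continuity_2d_pt_ext with (f := px (pt F)).
    + intros u v. assert (A3 : (fun z => Derive (fun w => F w z) u) = (fun z => pt F u z))
        by (apply functional_extensionality; intro; apply E2).
      rewrite A3. symmetry. apply Derive_eq, (proj1 (proj2 (proj2 (smooth_inv _ H2)))).
    + apply cont2_2d. apply (smooth_inv _ (proj2 (proj2 (proj2 (proj2 (smooth_inv _ H2)))))).
Qed.
End Sm.

Lemma locally_R (P : R -> Prop) u e : 0 < e -> (forall t, Rabs (t - u) < e -> P t) -> locally u P.
Proof.
  intros He H. exists (mkposreal e He). intros y Hy. apply H. exact Hy.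
Qed.

Lemma param_deriv (phi D : R -> R -> R) a b u e : 0 < e ->
  (forall t y, Rabs (t - u) < e -> is_derive (fun z => phi z y) t (D t y)) ->
  (forall y, continuity_2d_pt D u y) ->
  (forall t y, Rabs (t - u) < e -> continuity_pt (phi t) y) ->
  is_derive (fun t => RInt (phi t) a b) u (RInt (D u) a b).
Proof.
  intros He Hd Hc Hx.
  assert (E : RInt (D u) a b = RInt (fun y => Derive (fun z => phi z y) u) a b).
  { apply RInt_ext. intros y _. symmetry. apply is_derive_unique. apply Hd.
    rewrite Rminus_diag, Rabs_R0; exact He. }
  rewrite E. apply (is_derive_RInt_param phi a b u).
  - apply (locally_R _ u e He). intros t Ht y _. eexists. apply Hd; exact Ht.
  - intros y _. apply continuity_2d_pt_ext_loc with (f := D).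
    + exists (mkposreal e He). intros t w Ht _. symmetry. apply is_derive_unique, Hd; exact Ht.
    + apply Hc.
  - apply (locally_R _ u e He). intros t Ht. apply (@ex_RInt_continuous R_CompleteNormedModule).
    intros z _. apply continuity_pt_filterlim. apply Hx; exact Ht.
Qed.

Lemma ex_RInt_cont (phi : R -> R) a b :
  (forall y, Rmin a b <= y <= Rmax a b -> continuity_pt phi y) -> ex_RInt phi a b.
Proof.
  intro H. apply (@ex_RInt_continuous R_CompleteNormedModule).
  intros z Hz. apply continuity_pt_filterlim. apply H; exact Hz.
Qed.

Lemma RInt_minusR (F G : R -> R) a b : ex_RInt F a b -> ex_RInt G a b ->
  RInt (fun x => F x - G x) a b = RInt F a b - RInt G a b.
Proof. intros H1 H2. exact (@RInt_minus R_CompleteNormedModule F G a b H1 H2). Qed.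

Lemma RInt_plusR (F G : R -> R) a b : ex_RInt F a b -> ex_RInt G a b ->
  RInt (fun x => F x + G x) a b = RInt F a b + RInt G a b.
Proof. intros H1 H2. exact (@RInt_plus R_CompleteNormedModule F G a b H1 H2). Qed.

Lemma RInt_ChaslesR (F : R -> R) a b c : ex_RInt F a b -> ex_RInt F b c ->
  RInt F a b + RInt F b c = RInt F a c.
Proof. intros H1 H2. exact (@RInt_Chasles R_CompleteNormedModule F a b c H1 H2). Qed.

Lemma ex_RInt_ChaslesR (F : R -> R) a b c : ex_RInt F a b -> ex_RInt F b c -> ex_RInt F a c.
Proof. intros H1 H2. exact (@ex_RInt_Chasles R_NormedModule F a b c H1 H2). Qed.

Lemma RInt_bound_theta (F th : R -> R) a b : a <= b -> ex_RInt F a b -> ex_RInt th a b ->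
  (forall x, a <= x <= b -> Rabs (F x) <= th x) -> Rabs (RInt F a b) <= RInt th a b.
Proof.
  intros Hab H1 H2 H. eapply Rle_trans. apply abs_RInt_le; auto.
  apply RInt_le; auto. apply (ex_RInt_norm F a b H1).
  intros x Hx. apply H. lra.
Qed.

Lemma FTC_R (Q DQ : R -> R) a b :
  (forall x, Rmin a b <= x <= Rmax a b -> is_derive Q x (DQ x)) ->
  (forall x, Rmin a b <= x <= Rmax a b -> continuity_pt DQ x) ->
  RInt DQ a b = Q b - Q a.
Proof.
  intros H1 H2. apply is_RInt_unique.
  apply (@is_RInt_derive R_CompleteNormedModule Q DQ a b H1).
  intros x Hx. apply continuity_pt_filterlim, H2, Hx.
Qed.

Lemma param_cont (phi : R -> R -> R) (P : R -> Prop) a b t : a <= b -> P t ->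
  (forall y, a <= y <= b -> continuity_2d_pt phi t y) ->
  (forall s, P s -> ex_RInt (phi s) a b) ->
  forall eps, 0 < eps -> exists d, 0 < d /\ forall s, P s -> Rabs (s - t) < d ->
    Rabs (RInt (phi s) a b - RInt (phi t) a b) <= eps.
Proof.
  intros Hab Pt Hc Hi eps He.
  assert (He' : 0 < eps / (b - a + 1)) by (apply Rdiv_lt_0_compat; lra).
  destruct (uniform_continuity_2d_1d' phi a b t Hc (mkposreal _ He')) as [d Hd].
  exists d. split. apply cond_pos. intros s Ps Hs.
  rewrite <- RInt_minusR by auto.
  eapply Rle_trans. apply abs_RInt_le_const with (M := eps / (b - a + 1)).
  exact Hab. apply (@ex_RInt_minus R_NormedModule); auto.
  intros y Hy. left. apply (Hd y t y s); auto.
  - pose proof (cond_pos d); lra.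
  - apply Rabs_def2 in Hs. lra.
  - rewrite Rminus_diag, Rabs_R0. apply cond_pos.
  - apply Rle_trans with ((b - a + 1) * (eps / (b - a + 1))).
    apply Rmult_le_compat_r; lra. right; field; lra.
Qed.


Lemma int_ex th a b : integrable_R th -> ex_RInt th a b.
Proof. intros [H _]. destruct (H a b) as [pr]. apply ex_RInt_Reals_1; exact pr. Qed.

Lemma int_ex_abs th a b : integrable_R th -> ex_RInt (fun x => Rabs (th x)) a b.
Proof. intro H. apply (ex_RInt_norm th). apply int_ex; exact H. Qed.

Lemma int_bound th : integrable_R th -> exists M, forall c d, c <= d ->
  RInt (fun x => Rabs (th x)) c d <= M.
Proof.
  intro H. pose proof H as [_ [M HM]]. exists M. intros c d Hcd.
  pose proof (ex_RInt_Reals_0 _ _ _ (int_ex_abs th c d H)) as pr.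
  rewrite (RInt_Reals _ _ _ pr). apply HM; exact Hcd.
Qed.

Lemma RInt_abs_ge0 th c d : c <= d -> ex_RInt (fun x => Rabs (th x)) c d ->
  0 <= RInt (fun x => Rabs (th x)) c d.
Proof.
  intros Hcd Hi. apply RInt_ge_0; auto. intros; apply Rabs_pos.
Qed.

Lemma tail_theta th : integrable_R th -> forall eps, 0 < eps -> exists M, 0 <= M /\
  forall c d, c <= d -> (M <= c \/ d <= - M) -> RInt (fun x => Rabs (th x)) c d <= eps.
Proof.
  intros Hth eps He.
  set (E := fun y => exists c d, c <= d /\ y = RInt (fun x => Rabs (th x)) c d).
  destruct (int_bound th Hth) as [Mb HMb].
  assert (Hb : bound E). { exists Mb. intros y [c [d [Hcd ->]]]. apply HMb; exact Hcd. }
  assert (Hne : exists y, E y). { exists (RInt (fun x => Rabs (th x)) 0 0). exists 0, 0. split; lra. }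
  destruct (completeness E Hb Hne) as [S [HS1 HS2]].
  assert (Hex : exists y, E y /\ S - eps < y).
  { apply NNPP. intro N. assert (S <= S - eps). apply HS2. intros y Ey.
    apply Rnot_lt_le. intro. apply N. exists y; auto. lra. }
  destruct Hex as [y0 [[c0 [d0 [Hcd0 ->]]] Hy0]].
  exists (Rabs c0 + Rabs d0 + 1). split. pose proof (Rabs_pos c0); pose proof (Rabs_pos d0); lra.
  pose proof (Rle_abs c0); pose proof (Rle_abs d0);
  pose proof (Rle_abs (-c0)); pose proof (Rle_abs (-d0)); rewrite Rabs_Ropp in *.
  intros c d Hcd [Hc | Hd].
  - assert (T : RInt (fun x => Rabs (th x)) c0 d0 + RInt (fun x => Rabs (th x)) d0 c
              + RInt (fun x => Rabs (th x)) c d <= S).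
    { rewrite !RInt_ChaslesR by (apply int_ex_abs; auto). apply HS1. exists c0, d. split; lra||reflexivity. }
    pose proof (RInt_abs_ge0 th d0 c ltac:(lra) (int_ex_abs _ _ _ Hth)). lra.
  - assert (T : RInt (fun x => Rabs (th x)) c d + RInt (fun x => Rabs (th x)) d c0
              + RInt (fun x => Rabs (th x)) c0 d0 <= S).
    { rewrite !RInt_ChaslesR by (apply int_ex_abs; auto). apply HS1. exists c, d0. split; lra||reflexivity. }
    pose proof (RInt_abs_ge0 th d c0 ltac:(lra) (int_ex_abs _ _ _ Hth)). lra.
Qed.



Lemma RInt_constR a b c : RInt (fun _ => c) a b = c * (b - a).
Proof. rewrite RInt_const. unfold scal; simpl. unfold mult; simpl. ring. Qed.

Section OneD.
Variables (phi dphi : R -> R).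
Hypothesis Hd : forall x, is_derive phi x (dphi x).
Hypothesis Hc : continuity dphi.
Hypothesis Hp : forall x, 0 < phi x.
Hypothesis Hi : integral_R phi 1.

Lemma phi_cont : continuity phi.
Proof. intro x. apply derivable_continuous_pt. exists (dphi x). apply is_derive_Reals, Hd. Qed.

Lemma phi_ex a b : ex_RInt phi a b.
Proof. apply ex_RInt_cont. intros; apply phi_cont. Qed.

Lemma phi_int a b : a <= b -> 0 <= RInt phi a b.
Proof. intro. apply RInt_ge_0; auto. apply phi_ex. intros; left; apply Hp. Qed.

Lemma samesign eps x y : 0 < eps -> x <= y -> (forall z, x <= z <= y -> eps <= Rabs (dphi z)) ->
  (eps <= dphi x <-> eps <= dphi y).
Proof.
  intros He Hxy H.
  assert (Hx := H x ltac:(lra)). assert (Hy := H y ltac:(lra)).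
  assert (Nz : forall z, x <= z <= y -> dphi z <> 0).
  { intros z Hz E. specialize (H z Hz). rewrite E, Rabs_R0 in H. lra. }
  split; intro A; apply Rnot_lt_le; intro B.
  - assert (dphi y <= - eps). { destruct (Rle_lt_dec 0 (dphi y)).
      rewrite Rabs_pos_eq in Hy; lra. rewrite Rabs_left in Hy; lra. }
    destruct (IVT_cor dphi x y Hc Hxy) as [z [Hz Ez]]. nra. exact (Nz z Hz Ez).
  - assert (dphi x <= - eps). { destruct (Rle_lt_dec 0 (dphi x)).
      rewrite Rabs_pos_eq in Hx; lra. rewrite Rabs_left in Hx; lra. }
    destruct (IVT_cor dphi x y Hc Hxy) as [z [Hz Ez]]. nra. exact (Nz z Hz Ez).
Qed.

Lemma mvt_lb p q k : p <= q -> (forall z, p <= z <= q -> k <= dphi z) -> k * (q - p) <= phi q - phi p.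
Proof.
  intros Hpq H. destruct (MVT_gen phi p q dphi) as [c [Hc1 Hc2]].
  intros; apply Hd. intros; apply phi_cont.
  rewrite Hc2. rewrite Rmin_left, Rmax_right in Hc1 by lra.
  apply Rmult_le_compat_r. lra. apply H; lra.
Qed.

Lemma mvt_ub p q k : p <= q -> (forall z, p <= z <= q -> dphi z <= k) -> phi q - phi p <= k * (q - p).
Proof.
  intros Hpq H. destruct (MVT_gen phi p q dphi) as [c [Hc1 Hc2]].
  intros; apply Hd. intros; apply phi_cont.
  rewrite Hc2. rewrite Rmin_left, Rmax_right in Hc1 by lra.
  apply Rmult_le_compat_r. lra. apply H; lra.
Qed.

Lemma int_big_contra N k : 0 < k -> ((forall x, N <= x -> k <= phi x) \/ (forall x, x <= N -> k <= phi x)) -> False.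
Proof.
  intros Hk HH.
  destruct (Hi 1 Rlt_0_1) as [M HM].
  set (a := - (Rabs M + Rabs N + 2 / k + 1)). set (b := Rabs M + Rabs N + 2 / k + 1).
  pose proof (Rle_abs M); pose proof (Rle_abs N); pose proof (Rle_abs (-M)); pose proof (Rle_abs (-N));
  rewrite Rabs_Ropp in *.
  assert (H2k : 0 < 2 / k) by (apply Rdiv_lt_0_compat; lra).
  pose proof (ex_RInt_Reals_0 _ _ _ (phi_ex a b)) as pr.
  specialize (HM a b pr ltac:(unfold a; lra) ltac:(unfold b; lra)).
  rewrite <- RInt_Reals in HM. apply Rabs_def2 in HM.
  rewrite <- (RInt_ChaslesR phi a N b) in HM by apply phi_ex.
  assert (k * (2 / k) = 2) by (field; lra).
  destruct HH as [HH|HH].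
  - assert (k * (b - N) <= RInt phi N b).
    { rewrite <- (RInt_constR N b k). apply RInt_le. unfold b; lra. apply (@ex_RInt_const R_NormedModule). apply phi_ex.
      intros x Hx; apply HH; lra. }
    pose proof (phi_int a N ltac:(unfold a; lra)).
    assert (k * (b - N) >= 2). { assert (b - N >= 2 / k) by (unfold b; lra). nra. }
    lra.
  - assert (k * (N - a) <= RInt phi a N).
    { rewrite <- (RInt_constR a N k). apply RInt_le. unfold a; lra. apply (@ex_RInt_const R_NormedModule). apply phi_ex.
      intros x Hx; apply HH; lra. }
    pose proof (phi_int N b ltac:(unfold b; lra)).
    assert (k * (N - a) >= 2). { assert (N - a >= 2 / k) by (unfold a; lra). nra. }
    lra.
Qed.

Lemma dphi_small_pos eps N : 0 < eps -> exists x, N <= x /\ Rabs (dphi x) < eps.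
Proof.
  intros He. apply NNPP. intro Hn.
  assert (H : forall x, N <= x -> eps <= Rabs (dphi x)).
  { intros x Hx. apply Rnot_lt_le. intro. apply Hn. exists x; auto. }
  destruct (Rle_lt_dec eps (dphi N)) as [Hpos|Hneg].
  - assert (A : forall x, N <= x -> eps <= dphi x).
    { intros x Hx. apply (samesign eps N x He Hx). intros; apply H; lra. exact Hpos. }
    apply (int_big_contra (N + 1) eps He). left. intros x Hx.
    pose proof (mvt_lb N x eps ltac:(lra) ltac:(intros; apply A; lra)). pose proof (Hp N). nra.
  - assert (A : forall x, N <= x -> dphi x <= - eps).
    { intros x Hx. destruct (Rle_lt_dec eps (dphi x)) as [B|B].
      - exfalso. apply (samesign eps N x He Hx) in B. lra. intros; apply H; lra.
      - specialize (H x Hx). destruct (Rle_lt_dec 0 (dphi x)).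
        rewrite Rabs_pos_eq in H; lra. rewrite Rabs_left in H; lra. }
    set (x := N + phi N / eps + 1).
    assert (0 < phi N / eps) by (apply Rdiv_lt_0_compat; auto).
    pose proof (mvt_ub N x (- eps) ltac:(unfold x; lra) ltac:(intros; apply A; lra)) as M1.
    pose proof (Hp x) as P1. assert (E1 : eps * (phi N / eps) = phi N) by (field; lra).
    assert (E2 : x - N = phi N / eps + 1) by (unfold x; ring). rewrite E2 in M1. nra.
Qed.

Lemma dphi_small_neg eps N : 0 < eps -> exists x, x <= N /\ Rabs (dphi x) < eps.
Proof.
  intros He. apply NNPP. intro Hn.
  assert (H : forall x, x <= N -> eps <= Rabs (dphi x)).
  { intros x Hx. apply Rnot_lt_le. intro. apply Hn. exists x; auto. }
  destruct (Rle_lt_dec eps (dphi N)) as [Hpos|Hneg].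
  - assert (A : forall x, x <= N -> eps <= dphi x).
    { intros x Hx. apply (samesign eps x N He Hx). intros; apply H; lra. exact Hpos. }
    set (x := N - phi N / eps - 1).
    assert (0 < phi N / eps) by (apply Rdiv_lt_0_compat; auto).
    pose proof (mvt_lb x N eps ltac:(unfold x; lra) ltac:(intros; apply A; lra)) as M1.
    pose proof (Hp x) as P1. assert (E1 : eps * (phi N / eps) = phi N) by (field; lra).
    assert (E2 : N - x = phi N / eps + 1) by (unfold x; ring). rewrite E2 in M1. nra.
  - assert (A : forall x, x <= N -> dphi x <= - eps).
    { intros x Hx. destruct (Rle_lt_dec eps (dphi x)) as [B|B].
      - exfalso. apply (samesign eps x N He Hx) in B. lra. intros; apply H; lra.
      - specialize (H x Hx). destruct (Rle_lt_dec 0 (dphi x)).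
        rewrite Rabs_pos_eq in H; lra. rewrite Rabs_left in H; lra. }
    apply (int_big_contra (N - 1) eps He). right. intros x Hx.
    pose proof (mvt_ub x N (- eps) ltac:(lra) ltac:(intros; apply A; lra)). pose proof (Hp N). nra.
Qed.
End OneD.


Section Main.
Variables (f : R -> R -> R) (v : R) (alpha : R -> R).
Hypothesis Hsmooth : smooth2 f.
Hypothesis Hpos : forall t x, 0 <= t <= 1 -> 0 < f t x.
Hypothesis Hprob : forall t, 0 <= t <= 1 -> integral_R (f t) 1.
Hypothesis Halpha_C1 : C1_on_R alpha.
Hypothesis Halpha_mono : forall s t, 0 <= s <= 1 -> 0 <= t <= 1 -> s <= t -> alpha s <= alpha t.

Definition gg := fun t x => v * f t x + alpha t * px f t x.
Definition hh := fun t x => v ^ 2 * f t x + 2 * v * alpha t * px f t x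
                      + alpha t ^ 2 * px (px f) t x - deriv alpha t * f t x.

Lemma sf0 : smooth2 f. Proof. exact Hsmooth. Qed.
Lemma sf1 : smooth2 (px f). Proof. apply sm_px, sf0. Qed.
Lemma sf2 : smooth2 (px (px f)). Proof. apply sm_px, sf1. Qed.
Lemma sf3 : smooth2 (px (px (px f))). Proof. apply sm_px, sf2. Qed.
Lemma sf4 : smooth2 (px (px (px (px f)))). Proof. apply sm_px, sf3. Qed.
Lemma st0 : smooth2 (pt f). Proof. apply sm_pt, sf0. Qed.
Lemma st1 : smooth2 (pt (px f)). Proof. apply sm_pt, sf1. Qed.
Lemma st2 : smooth2 (pt (px (px f))). Proof. apply sm_pt, sf2. Qed.
Hint Resolve sf0 sf1 sf2 sf3 sf4 st0 st1 st2 : smooth.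

Ltac exd1 := first [ exact I
  | exact (sm_ex _ sf0 _ _) | exact (sm_ex _ sf1 _ _) | exact (sm_ex _ sf2 _ _)
  | exact (sm_ex _ sf3 _ _) | exact (sm_ex _ sf4 _ _)
  | exact (sm_et _ sf0 _ _) | exact (sm_et _ sf1 _ _) | exact (sm_et _ sf2 _ _)
  | exact (sm_et _ sf3 _ _) | exact (sm_et _ sf4 _ _) ].
Ltac exd := repeat match goal with |- _ /\ _ => split end; try exd1.
Ltac rwD := rewrite ?(sm_Dx _ sf0), ?(sm_Dx _ sf1), ?(sm_Dx _ sf2), ?(sm_Dx _ sf3), ?(sm_Dx _ sf4).

Lemma pxg_eq t x : px gg t x = v * px f t x + alpha t * px (px f) t x.
Proof.
  apply deriv_eq, is_derive_Reals. unfold gg.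
  auto_derive. exd. rwD. ring.
Qed.

Lemma pxg_fun t : (fun y => px gg t y) = (fun y => v * px f t y + alpha t * px (px f) t y).
Proof. apply functional_extensionality; intro; apply pxg_eq. Qed.

Lemma pxh_eq t x : px hh t x = v ^ 2 * px f t x + 2 * v * alpha t * px (px f) t x
                      + alpha t ^ 2 * px (px (px f)) t x - deriv alpha t * px f t x.
Proof.
  apply deriv_eq, is_derive_Reals. unfold hh.
  auto_derive. exd. rwD. ring.
Qed.

Lemma pxh_fun t : (fun y => px hh t y) = (fun y => v ^ 2 * px f t y + 2 * v * alpha t * px (px f) t y
                      + alpha t ^ 2 * px (px (px f)) t y - deriv alpha t * px f t y).
Proof. apply functional_extensionality; intro; apply pxh_eq. Qed.

Lemma pxpxh_eq t x : px (px hh) t x = v ^ 2 * px (px f) t x + 2 * v * alpha t * px (px (px f)) t x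
                      + alpha t ^ 2 * px (px (px (px f))) t x - deriv alpha t * px (px f) t x.
Proof.
  unfold px at 1. rewrite pxh_fun.
  apply deriv_eq, is_derive_Reals.
  auto_derive. exd. rwD. ring.
Qed.

Hypothesis HPDE : forall t x, 0 <= t <= 1 -> pt f t x = - px gg t x.

Lemma alpha_d t : is_derive alpha t (deriv alpha t).
Proof. apply is_derive_Reals. apply Halpha_C1. Qed.
Lemma alpha_D t : Derive alpha t = deriv alpha t.
Proof. apply is_derive_unique, alpha_d. Qed.
Lemma alpha_D' t : Derive (fun z => alpha z) t = deriv alpha t.
Proof. apply is_derive_unique, alpha_d. Qed.
Lemma alpha_ex t : ex_derive alpha t.
Proof. eexists; apply alpha_d. Qed.
Lemma alpha_ex' t : ex_derive (fun z => alpha z) t.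
Proof. eexists; apply alpha_d. Qed.
Lemma alpha_c t : continuity_pt alpha t.
Proof. apply derivable_continuous_pt. exists (deriv alpha t). apply Halpha_C1. Qed.
Lemma beta_c t : continuity_pt (deriv alpha) t.
Proof. apply Halpha_C1. Qed.

Lemma beta_nonneg u : 0 < u < 1 -> 0 <= deriv alpha u.
Proof.
  intro Hu. apply Rnot_lt_le. intro Hneg.
  destruct Halpha_C1 as [Hd _]. specialize (Hd u).
  destruct (Hd (- deriv alpha u) ltac:(lra)) as [d Hdd].
  set (k := Rmin (d / 2) ((1 - u) / 2)).
  assert (Hk : 0 < k) by (unfold k; apply Rmin_glb_lt; pose proof (cond_pos d); lra).
  assert (Hk2 : k <= (1 - u) / 2) by apply Rmin_r.
  assert (Hk3 : k <= d / 2) by apply Rmin_l.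
  specialize (Hdd k ltac:(lra) ltac:(rewrite Rabs_pos_eq; pose proof (cond_pos d); lra)).
  assert (alpha u <= alpha (u + k)) by (apply Halpha_mono; lra).
  assert (0 <= (alpha (u + k) - alpha u) / k) by (apply Rdiv_le_0_compat; lra).
  apply Rabs_def2 in Hdd. lra.
Qed.

Lemma pt0 t x : 0 <= t <= 1 -> pt f t x = - (v * px f t x + alpha t * px (px f) t x).
Proof. intro Ht. rewrite HPDE, pxg_eq; auto. Qed.

Lemma pt1 t x : 0 <= t <= 1 -> pt (px f) t x = - (v * px (px f) t x + alpha t * px (px (px f)) t x).
Proof.
  intro Ht. rewrite sm_schwarz by apply sf0. unfold px at 1.
  assert (E : (fun y => pt f t y) = (fun y => - (v * px f t y + alpha t * px (px f) t y)))
    by (apply functional_extensionality; intro; apply pt0; auto).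
  rewrite E. apply deriv_eq, is_derive_Reals. auto_derive. exd. rwD. ring.
Qed.

Lemma pt2 t x : 0 <= t <= 1 -> pt (px (px f)) t x = - (v * px (px (px f)) t x + alpha t * px (px (px (px f))) t x).
Proof.
  intro Ht. rewrite sm_schwarz by apply sf1. unfold px at 1.
  assert (E : (fun y => pt (px f) t y) = (fun y => - (v * px (px f) t y + alpha t * px (px (px f)) t y)))
    by (apply functional_extensionality; intro; apply pt1; auto).
  rewrite E. apply deriv_eq, is_derive_Reals. auto_derive. exd. rwD. ring.
Qed.

Lemma near_int u : 0 < u < 1 -> 0 < Rmin u (1 - u) /\ forall t, Rabs (t - u) < Rmin u (1 - u) -> 0 < t < 1.
Proof.
  intro Hu. split. apply Rmin_glb_lt; lra.
  intros t Ht. pose proof (Rmin_l u (1-u)); pose proof (Rmin_r u (1-u)).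
  apply Rabs_def2 in Ht. lra.
Qed.

Lemma exd_cont (F : R -> R) x : ex_derive F x -> continuity_pt F x.
Proof. intro H. apply continuity_pt_filterlim. apply (ex_derive_continuous F x H). Qed.

Ltac c2 := unfold Rdiv; repeat match goal with
  | |- continuity_2d_pt (fun _ _ => ?c) _ _ => apply continuity_2d_pt_const
  | |- continuity_2d_pt (fun u v => _ + _) _ _ => apply continuity_2d_pt_plus
  | |- continuity_2d_pt (fun u v => _ - _) _ _ => apply continuity_2d_pt_minus
  | |- continuity_2d_pt (fun u v => _ * _) _ _ => apply continuity_2d_pt_mult
  | |- continuity_2d_pt (fun u v => - _) _ _ => apply continuity_2d_pt_opp
  | |- continuity_2d_pt (fun u v => / f u v) _ _ =>
      apply (continuity_2d_pt_inv (fun u v => f u v)); [| apply Rgt_not_eq, Hpos; lra]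
  | |- continuity_2d_pt (fun u v => ln (f u v)) _ _ =>
      apply (continuity_1d_2d_pt_comp ln (fun u v => f u v));
      [apply derivable_continuous_pt; eexists; apply derivable_pt_lim_ln, Hpos; lra|]
  | |- continuity_2d_pt (fun u v => alpha u) _ _ =>
      apply (continuity_1d_2d_pt_comp alpha (fun u _ => u)); [apply alpha_c | apply continuity_2d_pt_id1]
  | |- continuity_2d_pt (fun u v => deriv alpha u) _ _ =>
      apply (continuity_1d_2d_pt_comp (deriv alpha) (fun u _ => u)); [apply beta_c | apply continuity_2d_pt_id1]
  | |- continuity_2d_pt (fun u v => ?F u v) _ _ => apply (cont2_2d F); apply sm_c; auto with smooth
  | |- continuity_2d_pt ?F _ _ => solve [apply (cont2_2d F); apply sm_c; auto with smooth]
  end.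

Definition DK t y := (v * pt (px f) t y + deriv alpha t * px (px f) t y + alpha t * pt (px (px f)) t y) * ln (f t y)
   + (v * px f t y + alpha t * px (px f) t y) * (pt f t y / f t y).

Lemma Kder u a b : 0 < u < 1 ->
  is_derive (fun t => RInt (fun x => px gg t x * ln (f t x)) a b) u
    (RInt (fun x => - (px (px hh) u x * ln (f u x) + (px gg u x) ^ 2 * / f u x)) a b).
Proof.
  intro Hu. destruct (near_int u Hu) as [He Hn].
  assert (E : RInt (fun x => - (px (px hh) u x * ln (f u x) + (px gg u x) ^ 2 * / f u x)) a b
            = RInt (DK u) a b).
  { apply RInt_ext. intros x _. unfold DK. rewrite pxpxh_eq, pxg_eq, pt0, pt1, pt2 by lra.
    assert (0 < f u x) by (apply Hpos; lra). match goal with |- ?A = ?B => change (A = B :> R) end. field. lra. }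
  rewrite E. apply (param_deriv (fun t x => px gg t x * ln (f t x)) DK a b u _ He).
  - intros t y Ht. specialize (Hn t Ht).
    cbv beta. apply (is_derive_ext (fun z => (v * px f z y + alpha z * px (px f) z y) * ln (f z y))).
    { intro; rewrite pxg_eq; reflexivity. }
    unfold DK. auto_derive.
    + exd. apply alpha_ex'. apply Hpos; lra.
    + rewrite alpha_D', (sm_Dt _ sf0), (sm_Dt _ sf1), (sm_Dt _ sf2).
      assert (0 < f t y) by (apply Hpos; lra). field. lra.
  - intros y. unfold DK. c2.
  - intros t y Ht. specialize (Hn t Ht). apply exd_cont.
    cbv beta. apply (ex_derive_ext (fun x => (v * px f t x + alpha t * px (px f) t x) * ln (f t x))).
    { intro; rewrite pxg_eq; reflexivity. }
    auto_derive. exd. apply Hpos; lra.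
Qed.

Definition DH t y := - (pt f t y * ln (f t y) + f t y * (pt f t y / f t y)).

Lemma Hder u a b : 0 < u < 1 ->
  is_derive (fun t => RInt (fun x => - (f t x * ln (f t x))) a b) u
    (RInt (fun x => px gg u x * (1 + ln (f u x))) a b).
Proof.
  intro Hu. destruct (near_int u Hu) as [He Hn].
  assert (E : RInt (fun x => px gg u x * (1 + ln (f u x))) a b = RInt (DH u) a b).
  { apply RInt_ext. intros x _. unfold DH. rewrite HPDE by lra.
    assert (0 < f u x) by (apply Hpos; lra).
    match goal with |- ?A = ?B => change (A = B :> R) end. field. lra. }
  rewrite E. apply (param_deriv (fun t x => - (f t x * ln (f t x))) DH a b u _ He).
  - intros t y Ht. specialize (Hn t Ht). cbv beta.
    unfold DH. auto_derive.
    + exd. apply Hpos; lra.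
    + rewrite (sm_Dt _ sf0). assert (0 < f t y) by (apply Hpos; lra). field. lra.
  - intros y. unfold DH. c2.
  - intros t y Ht. specialize (Hn t Ht). apply exd_cont. cbv beta.
    auto_derive. exd. apply Hpos; lra.
Qed.

Definition psi u x := - (px (px hh) u x * ln (f u x) + (px gg u x) ^ 2 * / f u x).

Definition Qf u x := - (px hh u x * ln (f u x)) + hh u x / f u x * px f u x
   - (gg u x / f u x) ^ 2 * px f u x + deriv alpha u * px f u x.

Section QQ.
Variable u : R.
Hypothesis Hu : 0 < u < 1.
Let a0 x := f u x.
Let a1 x := px f u x.
Let a2 x := px (px f) u x.
Let a3 x := px (px (px f)) u x.
Let a4 x := px (px (px (px f))) u x.
Let al := alpha u.
Let be := deriv alpha u.
Let P1 x := v ^ 2 * a1 x + 2 * v * al * a2 x + al ^ 2 * a3 x - be * a1 x.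
Let P2 x := v ^ 2 * a2 x + 2 * v * al * a3 x + al ^ 2 * a4 x - be * a2 x.
Let Hh x := v ^ 2 * a0 x + 2 * v * al * a1 x + al ^ 2 * a2 x - be * a0 x.
Let G x := v * a0 x + al * a1 x.
Let G1 x := v * a1 x + al * a2 x.

Definition DQ x := -(P2 x * ln (a0 x) + P1 x * a1 x / a0 x)
  + ((P1 x * a0 x - Hh x * a1 x) / a0 x ^ 2) * a1 x + Hh x / a0 x * a2 x
  - 2 * (G x / a0 x) * ((G1 x * a0 x - G x * a1 x) / a0 x ^ 2) * a1 x
  - (G x / a0 x) ^ 2 * a2 x + be * a2 x.

Lemma a0pos x : 0 < a0 x.
Proof. unfold a0; apply Hpos; lra. Qed.

Lemma psi_le_DQ x : psi u x <= DQ x.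
Proof.
  assert (E : DQ x - psi u x = 2 * al ^ 2 * a0 x * (a2 x / a0 x - a1 x ^ 2 / a0 x ^ 2) ^ 2
                               + be * (a1 x ^ 2 / a0 x)).
  { unfold DQ, psi. rewrite pxpxh_eq, pxg_eq. unfold P1, P2, Hh, G, G1, a0, a1, a2, a3, a4, al, be.
    pose proof (a0pos x) as H. unfold a0 in H. field. lra. }
  assert (0 <= 2 * al ^ 2 * a0 x * (a2 x / a0 x - a1 x ^ 2 / a0 x ^ 2) ^ 2).
  { pose proof (a0pos x). apply Rmult_le_pos. apply Rmult_le_pos. nra. lra. apply pow2_ge_0. }
  assert (0 <= be * (a1 x ^ 2 / a0 x)).
  { apply Rmult_le_pos. apply beta_nonneg; exact Hu. apply Rdiv_le_0_compat. apply pow2_ge_0. apply a0pos. }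
  lra.
Qed.

Lemma Qf_der x : is_derive (fun y => Qf u y) x (DQ x).
Proof.
  apply (@is_derive_ext R_AbsRing R_NormedModule (fun y => - (P1 y * ln (a0 y)) + Hh y / a0 y * a1 y
   - (G y / a0 y) ^ 2 * a1 y + be * a1 y)).
  { intro y. unfold Qf. rewrite pxh_eq. unfold P1, Hh, G, hh, gg, a0, a1, a2, a3, al, be. reflexivity. }
  pose proof (a0pos x) as H.
  unfold P1, Hh, G, a0, a1, a2, a3, al, be. unfold a0 in H. auto_derive.
  - exd. lra. lra. lra.
  - rwD. unfold DQ, P1, P2, Hh, G, G1, a0, a1, a2, a3, a4, al, be. field. lra.
Qed.

Lemma DQ_cont x : continuity_pt DQ x.
Proof.
  apply exd_cont. pose proof (a0pos x) as H.
  unfold DQ, P1, P2, Hh, G, G1, a0, a1, a2, a3, a4, al, be. unfold a0 in H. auto_derive.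
  exd; try lra; try apply Rgt_not_eq; try apply Rmult_lt_0_compat; lra.
Qed.

Lemma psi_cont x : continuity_pt (psi u) x.
Proof.
  apply exd_cont. pose proof (a0pos x) as H. unfold a0 in H.
  apply (@ex_derive_ext R_AbsRing R_NormedModule (fun y => - (P2 y * ln (a0 y) + G1 y ^ 2 * / a0 y))).
  { intro y. unfold psi. rewrite pxpxh_eq, pxg_eq. reflexivity. }
  unfold P2, G1, a0, a1, a2, a3, a4, al, be. auto_derive.
  exd; try lra; try apply Rgt_not_eq; try apply Rmult_lt_0_compat; lra.
Qed.

Lemma psi_Q a b : a <= b -> RInt (psi u) a b <= Qf u b - Qf u a.
Proof.
  intro Hab. rewrite <- (FTC_R (fun y => Qf u y) DQ a b).
  - apply RInt_le; auto. apply ex_RInt_cont; intros; apply psi_cont.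
    apply ex_RInt_cont; intros; apply DQ_cont.
    intros; apply psi_le_DQ.
  - intros; apply Qf_der.
  - intros; apply DQ_cont.
Qed.
End QQ.

Variables thA thB : R -> R.
Hypothesis HthA : integrable_R thA.
Hypothesis HthB : integrable_R thB.
Hypothesis Hbnd : forall t x, 0 <= t <= 1 ->
  Rabs (px gg t x * (1 + ln (f t x))) <= thA x /\
  Rabs (px (px hh) t x * ln (f t x) + (px gg t x) ^ 2 * / f t x) <= thB x.
Hypothesis Hvan : forall t, 0 <= t <= 1 ->
  vanishes_at_infty (gg t) /\
  vanishes_at_infty (fun x => px hh t x * ln (f t x)) /\
  vanishes_at_infty (fun x => hh t x / f t x * px f t x) /\
  vanishes_at_infty (fun x => (gg t x / f t x) ^ 2 * px f t x).

Lemma F1_small u eps N : 0 <= u <= 1 -> 0 < eps ->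
  (exists x, N <= x /\ Rabs (px f u x) < eps) /\ (exists x, x <= N /\ Rabs (px f u x) < eps).
Proof.
  intros Hu He.
  assert (Hd : forall x, is_derive (f u) x (px f u x)) by (intro; apply (sm_idx _ sf0)).
  assert (Hc : continuity (px f u)) by (intro; apply (cont2_x (px f)); apply sm_c, sf1).
  assert (Hp : forall x, 0 < f u x) by (intro; apply Hpos; auto).
  split.
  - apply (dphi_small_pos (f u) (px f u) Hd Hc Hp (Hprob u Hu)); auto.
  - apply (dphi_small_neg (f u) (px f u) Hd Hc Hp (Hprob u Hu)); auto.
Qed.

Lemma psi_bound u x : 0 <= u <= 1 -> Rabs (psi u x) <= Rabs (thB x).
Proof.
  intro Hu. unfold psi. rewrite Rabs_Ropp. eapply Rle_trans. apply (Hbnd u x Hu). apply Rle_abs.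
Qed.

Lemma Qf_small u eps : 0 < u < 1 -> 0 < eps -> exists M, forall x, M <= Rabs x ->
  Rabs (px f u x) < eps / (4 * (Rabs (deriv alpha u) + 1)) -> Rabs (Qf u x) < eps.
Proof.
  intros Hu He. destruct (Hvan u ltac:(lra)) as [_ [V1 [V2 V3]]].
  destruct (V1 (eps/4) ltac:(lra)) as [M1 H1].
  destruct (V2 (eps/4) ltac:(lra)) as [M2 H2].
  destruct (V3 (eps/4) ltac:(lra)) as [M3 H3].
  exists (Rmax M1 (Rmax M2 M3)). intros x Hx Hs.
  pose proof (Rmax_l M1 (Rmax M2 M3)); pose proof (Rmax_r M1 (Rmax M2 M3));
  pose proof (Rmax_l M2 M3); pose proof (Rmax_r M2 M3).
  specialize (H1 x ltac:(lra)). specialize (H2 x ltac:(lra)). specialize (H3 x ltac:(lra)).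
  assert (B : Rabs (deriv alpha u * px f u x) <= eps / 4).
  { rewrite Rabs_mult. pose proof (Rabs_pos (deriv alpha u)). pose proof (Rabs_pos (px f u x)).
    assert (Hq : 0 < 4 * (Rabs (deriv alpha u) + 1)) by lra.
    assert (Rabs (deriv alpha u) * Rabs (px f u x) <= (Rabs (deriv alpha u) + 1) * (eps / (4 * (Rabs (deriv alpha u) + 1)))).
    { apply Rmult_le_compat; lra. }
    assert ((Rabs (deriv alpha u) + 1) * (eps / (4 * (Rabs (deriv alpha u) + 1))) = eps / 4) by (field; lra).
    lra. }
  unfold Qf.
  pose proof (Rabs_triang (- (px hh u x * ln (f u x)) + hh u x / f u x * px f u x - (gg u x / f u x) ^ 2 * px f u x) (deriv alpha u * px f u x)).
  pose proof (Rabs_triang (- (px hh u x * ln (f u x)) + hh u x / f u x * px f u x) (- ((gg u x / f u x) ^ 2 * px f u x))).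
  pose proof (Rabs_triang (- (px hh u x * ln (f u x))) (hh u x / f u x * px f u x)).
  rewrite Rabs_Ropp in *. unfold Rminus in *. lra.
Qed.

Lemma Kbound eps : 0 < eps -> exists M, 0 <= M /\ forall a b, a <= - M -> M <= b ->
  forall u, 0 < u < 1 -> RInt (psi u) a b <= eps.
Proof.
  intros He. destruct (tail_theta thB HthB (eps / 4) ltac:(lra)) as [M [HM0 HM]].
  exists M. split; auto. intros a b Ha Hb u Hu.
  destruct (Qf_small u (eps / 4) Hu ltac:(lra)) as [MQ HMQ].
  set (eta := eps / 4 / (4 * (Rabs (deriv alpha u) + 1))).
  assert (Heta : 0 < eta). { unfold eta. pose proof (Rabs_pos (deriv alpha u)).
    apply Rdiv_lt_0_compat; lra. }
  set (N := Rabs MQ + Rabs a + Rabs b + 1).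
  pose proof (Rle_abs MQ); pose proof (Rle_abs a); pose proof (Rle_abs b);
  pose proof (Rle_abs (-MQ)); pose proof (Rle_abs (-a)); pose proof (Rle_abs (-b)); rewrite !Rabs_Ropp in *.
  destruct (F1_small u eta N ltac:(lra) Heta) as [[b2 [Hb2 Sb2]] _].
  destruct (F1_small u eta (- N) ltac:(lra) Heta) as [_ [a2 [Ha2 Sa2]]].
  assert (Qb : Rabs (Qf u b2) < eps / 4).
  { apply HMQ. unfold N in Hb2. pose proof (Rle_abs b2). lra. exact Sb2. }
  assert (Qa : Rabs (Qf u a2) < eps / 4).
  { apply HMQ. unfold N in Ha2. pose proof (Rle_abs (- a2)). rewrite Rabs_Ropp in H5. lra. exact Sa2. }
  assert (Ex : forall c d, ex_RInt (psi u) c d) by (intros; apply ex_RInt_cont; intros; apply psi_cont; lra).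
  assert (Cs : RInt (psi u) a2 a + RInt (psi u) a b + RInt (psi u) b b2 = RInt (psi u) a2 b2).
  { rewrite !RInt_ChaslesR; auto. }
  pose proof (psi_Q u Hu a2 b2 ltac:(unfold N in *; lra)) as PQ.
  assert (T1 : Rabs (RInt (psi u) a2 a) <= eps / 4).
  { eapply Rle_trans. apply RInt_bound_theta with (th := fun x => Rabs (thB x)).
    unfold N in *; lra. auto. apply int_ex_abs; auto. intros; apply psi_bound; lra.
    apply HM. unfold N in *; lra. right; lra. }
  assert (T2 : Rabs (RInt (psi u) b b2) <= eps / 4).
  { eapply Rle_trans. apply RInt_bound_theta with (th := fun x => Rabs (thB x)).
    unfold N in *; lra. auto. apply int_ex_abs; auto. intros; apply psi_bound; lra.
    apply HM. unfold N in *; lra. left; lra. }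
  apply Rabs_def2 in Qa. apply Rabs_def2 in Qb.
  pose proof (Rle_abs (RInt (psi u) a2 a)); pose proof (Rle_abs (- RInt (psi u) a2 a));
  pose proof (Rle_abs (RInt (psi u) b b2)); pose proof (Rle_abs (- RInt (psi u) b b2)).
  rewrite !Rabs_Ropp in *. lra.
Qed.

Lemma abs_le x a : Rabs x <= a -> - a <= x <= a.
Proof. intro H. pose proof (Rle_abs x); pose proof (Rle_abs (-x)). rewrite Rabs_Ropp in *. lra. Qed.

Definition rho t x := px gg t x * (1 + ln (f t x)).
Definition kap t x := px gg t x * ln (f t x).

Lemma rho_cont t x : 0 <= t <= 1 -> continuity_pt (rho t) x.
Proof.
  intro Ht. apply exd_cont. pose proof (Hpos t x Ht).
  apply (@ex_derive_ext R_AbsRing R_NormedModule (fun y => (v * px f t y + alpha t * px (px f) t y) * (1 + ln (f t y)))).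
  { intro y. unfold rho. rewrite pxg_eq. reflexivity. }
  auto_derive. exd. lra.
Qed.

Lemma kap_cont t x : 0 <= t <= 1 -> continuity_pt (kap t) x.
Proof.
  intro Ht. apply exd_cont. pose proof (Hpos t x Ht).
  apply (@ex_derive_ext R_AbsRing R_NormedModule (fun y => (v * px f t y + alpha t * px (px f) t y) * ln (f t y))).
  { intro y. unfold kap. rewrite pxg_eq. reflexivity. }
  auto_derive. exd. lra.
Qed.

Lemma pxg_cont t x : continuity_pt (px gg t) x.
Proof.
  apply exd_cont.
  apply (@ex_derive_ext R_AbsRing R_NormedModule (fun y => v * px f t y + alpha t * px (px f) t y)).
  { intro y. rewrite pxg_eq. reflexivity. }
  auto_derive. exd.
Qed.

Lemma gg_der t x : is_derive (gg t) x (px gg t x).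
Proof. rewrite pxg_eq. unfold gg. auto_derive. exd. rwD. ring. Qed.

Lemma DA_split t a b : 0 <= t <= 1 ->
  RInt (rho t) a b = (gg t b - gg t a) + RInt (kap t) a b.
Proof.
  intro Ht.
  rewrite <- (FTC_R (gg t) (px gg t) a b) by (intros; first [apply gg_der | apply pxg_cont]).
  rewrite <- RInt_plusR.
  - apply RInt_ext. intros. unfold rho, kap. simpl. ring.
  - apply ex_RInt_cont; intros; apply pxg_cont.
  - apply ex_RInt_cont; intros; apply kap_cont; auto.
Qed.

Lemma Dmono eps : 0 < eps -> exists M, 0 <= M /\ forall a b, a <= - M -> M <= b ->
  forall x1 x2, 0 < x1 -> x1 <= x2 -> x2 < 1 -> RInt (rho x2) a b <= RInt (rho x1) a b + eps.
Proof.
  intros He. destruct (tail_theta thA HthA (eps / 8) ltac:(lra)) as [MA [HMA0 HMA]].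
  destruct (Kbound (eps / 4) ltac:(lra)) as [MK [HMK0 HMK]].
  exists (Rmax MA MK). pose proof (Rmax_l MA MK); pose proof (Rmax_r MA MK).
  split; [lra|]. intros a b Ha Hb x1 x2 H1 H12 H2.
  destruct (Hvan x1 ltac:(lra)) as [V1 _]. destruct (Hvan x2 ltac:(lra)) as [V2 _].
  destruct (V1 (eps / 16) ltac:(lra)) as [M1 HM1].
  destruct (V2 (eps / 16) ltac:(lra)) as [M2 HM2].
  set (N := Rabs M1 + Rabs M2 + Rabs a + Rabs b + 1).
  pose proof (Rle_abs M1); pose proof (Rle_abs M2); pose proof (Rle_abs a); pose proof (Rle_abs b);
  pose proof (Rle_abs (-a)); pose proof (Rle_abs (-b)); rewrite !Rabs_Ropp in *.
  pose proof (Rabs_pos M1); pose proof (Rabs_pos M2); pose proof (Rabs_pos a); pose proof (Rabs_pos b).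
  assert (Nabs : Rabs N = N /\ Rabs (- N) = N).
  { rewrite Rabs_Ropp. unfold N. split; apply Rabs_pos_eq;
    pose proof (Rabs_pos M1); pose proof (Rabs_pos M2); lra. }
  assert (G1 : forall x, 0 <= x <= 1 -> (x = x1 \/ x = x2) ->
     Rabs (gg x N) < eps / 16 /\ Rabs (gg x (- N)) < eps / 16).
  { destruct Nabs as [NA NB].
    intros x Hx [->| ->]; split; [apply HM1 | apply HM1 | apply HM2 | apply HM2]; rewrite ?NA, ?NB; unfold N; lra. }
  assert (Tl : forall x, 0 <= x <= 1 -> Rabs (RInt (rho x) (- N) a) <= eps / 8 /\ Rabs (RInt (rho x) b N) <= eps / 8).
  { intros x Hx. split.
    - eapply Rle_trans. apply RInt_bound_theta with (th := fun y => Rabs (thA y)).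
      unfold N; lra. apply ex_RInt_cont; intros; apply rho_cont; auto. apply int_ex_abs; auto.
      intros y _. eapply Rle_trans. apply (Hbnd x y Hx). apply Rle_abs.
      apply HMA. unfold N; lra. right; lra.
    - eapply Rle_trans. apply RInt_bound_theta with (th := fun y => Rabs (thA y)).
      unfold N; lra. apply ex_RInt_cont; intros; apply rho_cont; auto. apply int_ex_abs; auto.
      intros y _. eapply Rle_trans. apply (Hbnd x y Hx). apply Rle_abs.
      apply HMA. unfold N; lra. left; lra. }
  assert (Cs : forall x, 0 <= x <= 1 ->
     RInt (rho x) (- N) a + RInt (rho x) a b + RInt (rho x) b N = RInt (rho x) (- N) N).
  { intros x Hx. assert (Ex : forall c d, ex_RInt (rho x) c d)
      by (intros; apply ex_RInt_cont; intros; apply rho_cont; auto).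
    rewrite !RInt_ChaslesR; auto. }
  assert (KK : RInt (kap x2) (- N) N - RInt (kap x1) (- N) N <= eps / 4).
  { destruct (MVT_gen (fun t => RInt (kap t) (- N) N) x1 x2
       (fun t => RInt (psi t) (- N) N)) as [c [Hc Hcv]].
    - intros t Ht. rewrite Rmin_left, Rmax_right in Ht by lra. apply Kder. lra.
    - intros t Ht. rewrite Rmin_left, Rmax_right in Ht by lra.
      apply derivable_continuous_pt. eexists. apply is_derive_Reals, Kder. lra.
    - rewrite Rmin_left, Rmax_right in Hc by lra. cbv beta in Hcv. rewrite Hcv.
      assert (RInt (psi c) (- N) N <= eps / 4) by (apply HMK; unfold N; lra).
      destruct (Rle_lt_dec 0 (RInt (psi c) (- N) N)); nra. }
  pose proof (Cs x1 ltac:(lra)) as C1; pose proof (Cs x2 ltac:(lra)) as C2.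
  pose proof (Tl x1 ltac:(lra)) as [T11 T12]; pose proof (Tl x2 ltac:(lra)) as [T21 T22].
  pose proof (G1 x1 ltac:(lra) ltac:(auto)) as [G11 G12]; pose proof (G1 x2 ltac:(lra) ltac:(auto)) as [G21 G22].
  rewrite (DA_split x1 (- N) N) in C1 by lra. rewrite (DA_split x2 (- N) N) in C2 by lra.
  apply abs_le in T11; apply abs_le in T12; apply abs_le in T21; apply abs_le in T22;
  apply Rabs_def2 in G11; apply Rabs_def2 in G12; apply Rabs_def2 in G21; apply Rabs_def2 in G22.
  lra.
Qed.

Definition phiH t x := - (f t x * ln (f t x)).

Lemma phiH_cont t x : 0 <= t <= 1 -> continuity_pt (phiH t) x.
Proof. intro Ht. apply exd_cont. pose proof (Hpos t x Ht). unfold phiH. auto_derive. exd. lra. Qed.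

Lemma HA_cont a b t : a <= b -> 0 <= t <= 1 -> forall eps, 0 < eps -> exists d, 0 < d /\
  forall s, 0 <= s <= 1 -> Rabs (s - t) < d -> Rabs (RInt (phiH s) a b - RInt (phiH t) a b) <= eps.
Proof.
  intros Hab Ht. apply (param_cont phiH (fun s => 0 <= s <= 1) a b t Hab Ht).
  - intros y _. unfold phiH. c2.
  - intros s Hs. apply ex_RInt_cont. intros; apply phiH_cont; auto.
Qed.

Lemma DA_bound : exists C, 0 <= C /\ forall a b x, a <= b -> 0 <= x <= 1 -> Rabs (RInt (rho x) a b) <= C.
Proof.
  destruct (int_bound thA HthA) as [C HC]. exists (Rabs C). split. apply Rabs_pos.
  intros a b x Hab Hx. eapply Rle_trans. apply RInt_bound_theta with (th := fun y => Rabs (thA y)).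
  auto. apply ex_RInt_cont; intros; apply rho_cont; auto. apply int_ex_abs; auto.
  intros y _. eapply Rle_trans. apply (Hbnd x y Hx). apply Rle_abs.
  eapply Rle_trans. apply HC; auto. apply Rle_abs.
Qed.

Lemma HA_mvt a b s m eps : a <= b -> 0 <= s -> s < m -> m <= 1 -> 0 < eps ->
  exists xi, s < xi < m /\
  Rabs (RInt (phiH m) a b - RInt (phiH s) a b - (m - s) * RInt (rho xi) a b) <= eps.
Proof.
  intros Hab Hs Hsm Hm He.
  destruct DA_bound as [C [HC0 HC]].
  destruct (HA_cont a b s Hab ltac:(lra) (eps / 3) ltac:(lra)) as [d1 [Hd1 Hd1']].
  destruct (HA_cont a b m Hab ltac:(lra) (eps / 3) ltac:(lra)) as [d2 [Hd2 Hd2']].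
  set (d := Rmin (Rmin (d1 / 2) (d2 / 2)) (Rmin ((m - s) / 4) (eps / (3 * (2 * C + 1))))).
  assert (Hq : 0 < eps / (3 * (2 * C + 1))) by (apply Rdiv_lt_0_compat; lra).
  assert (Hd : 0 < d) by (unfold d; repeat apply Rmin_glb_lt; lra).
  assert (D1 : d <= d1 / 2) by (unfold d; eapply Rle_trans; [apply Rmin_l|apply Rmin_l]).
  assert (D2 : d <= d2 / 2) by (unfold d; eapply Rle_trans; [apply Rmin_l|apply Rmin_r]).
  assert (D3 : d <= (m - s) / 4) by (unfold d; eapply Rle_trans; [apply Rmin_r|apply Rmin_l]).
  assert (D4 : d <= eps / (3 * (2 * C + 1))) by (unfold d; eapply Rle_trans; [apply Rmin_r|apply Rmin_r]).
  destruct (MVT_gen (fun t => RInt (phiH t) a b) (s + d) (m - d) (fun t => RInt (rho t) a b))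
    as [c [Hc Hcv]].
  - intros t Ht. rewrite Rmin_left, Rmax_right in Ht by lra. apply Hder. lra.
  - intros t Ht. rewrite Rmin_left, Rmax_right in Ht by lra.
    apply derivable_continuous_pt. eexists. apply is_derive_Reals, Hder. lra.
  - rewrite Rmin_left, Rmax_right in Hc by lra. cbv beta in Hcv.
    exists c. split. lra.
    assert (A1 : Rabs (RInt (phiH (s + d)) a b - RInt (phiH s) a b) <= eps / 3).
    { apply Hd1'. lra. rewrite Rabs_pos_eq; lra. }
    assert (A2 : Rabs (RInt (phiH (m - d)) a b - RInt (phiH m) a b) <= eps / 3).
    { apply Hd2'. lra. replace (m - d - m) with (- d) by ring. rewrite Rabs_Ropp, Rabs_pos_eq; lra. }
    assert (A3 : Rabs (RInt (rho c) a b) <= C) by (apply HC; auto; lra).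
    apply abs_le in A1. apply abs_le in A2. apply abs_le in A3.
    assert (Ceps : 2 * d * C <= eps / 3).
    { assert (2 * d * C <= 2 * C * (eps / (3 * (2 * C + 1)))) by nra.
      assert (2 * C * (eps / (3 * (2 * C + 1))) <= eps / 3).
      { unfold Rdiv. rewrite Rinv_mult. assert (0 < / (2 * C + 1)) by (apply Rinv_0_lt_compat; lra).
        assert (2 * C * / (2 * C + 1) <= 1).
        { apply (Rmult_le_reg_r (2 * C + 1)). lra. rewrite Rmult_assoc, Rinv_l by lra. lra. }
        assert (0 < eps * / 3) by lra. nra. }
      lra. }
    assert (B1 : d * RInt (rho c) a b <= d * C) by (apply Rmult_le_compat_l; lra).
    assert (B2 : - (d * C) <= d * RInt (rho c) a b) by nra.
    apply Rabs_le. split; nra.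
Qed.

Variable H : R -> R.
Hypothesis HH : forall t, 0 <= t <= 1 -> integral_R (fun x => - (f t x * ln (f t x))) (H t).

Lemma HA_approx t eps : 0 <= t <= 1 -> 0 < eps -> exists M, forall a b, a <= - M -> M <= b ->
  Rabs (RInt (phiH t) a b - H t) < eps.
Proof.
  intros Ht He. destruct (HH t Ht eps He) as [M HM]. exists M. intros a b Ha Hb.
  assert (Ex : ex_RInt (phiH t) a b) by (apply ex_RInt_cont; intros; apply phiH_cont; auto).
  pose proof (ex_RInt_Reals_0 _ _ _ Ex) as pr.
  rewrite (RInt_Reals _ _ _ pr). apply HM; auto.
Qed.

Lemma conc_main s t l : 0 <= s -> s < t -> t <= 1 -> 0 < l < 1 ->
  l * H s + (1 - l) * H t <= H (l * s + (1 - l) * t).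
Proof.
  intros Hs Hst Ht Hl. set (m := l * s + (1 - l) * t).
  assert (Hm1 : m - s = (1 - l) * (t - s)) by (unfold m; ring).
  assert (Hm2 : t - m = l * (t - s)) by (unfold m; ring).
  assert (Hsm : s < m) by nra. assert (Hmt : m < t) by nra.
  apply Rnot_lt_le. intro Hlt.
  set (eps := (l * H s + (1 - l) * H t - H m) / 8).
  assert (He : 0 < eps) by (unfold eps; lra).
  destruct (Dmono eps He) as [M [HM0 HM]].
  destruct (HA_approx s eps ltac:(lra) He) as [Ms HMs].
  destruct (HA_approx t eps ltac:(lra) He) as [Mt HMt].
  destruct (HA_approx m eps ltac:(lra) He) as [Mm HMm].
  set (N := Rabs M + Rabs Ms + Rabs Mt + Rabs Mm + 1).
  pose proof (Rle_abs M); pose proof (Rle_abs Ms); pose proof (Rle_abs Mt); pose proof (Rle_abs Mm);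
  pose proof (Rabs_pos M); pose proof (Rabs_pos Ms); pose proof (Rabs_pos Mt); pose proof (Rabs_pos Mm).
  specialize (HMs (- N) N ltac:(unfold N; lra) ltac:(unfold N; lra)).
  specialize (HMt (- N) N ltac:(unfold N; lra) ltac:(unfold N; lra)).
  specialize (HMm (- N) N ltac:(unfold N; lra) ltac:(unfold N; lra)).
  destruct (HA_mvt (- N) N s m eps ltac:(unfold N; lra) Hs Hsm ltac:(lra) He) as [x1 [Hx1 E1]].
  destruct (HA_mvt (- N) N m t eps ltac:(unfold N; lra) ltac:(lra) Hmt Ht He) as [x2 [Hx2 E2]].
  pose proof (HM (- N) N ltac:(unfold N; lra) ltac:(unfold N; lra) x1 x2 ltac:(lra) ltac:(lra) ltac:(lra)) as DM.
  apply abs_le in E1. apply abs_le in E2.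
  apply Rabs_def2 in HMs. apply Rabs_def2 in HMt. apply Rabs_def2 in HMm.
  set (D1 := RInt (rho x1) (- N) N) in *. set (D2 := RInt (rho x2) (- N) N) in *.
  rewrite Hm1 in E1. rewrite Hm2 in E2.
  assert (K : l * (1 - l) * (t - s) * (D2 - D1) <= l * (1 - l) * (t - s) * eps).
  { apply Rmult_le_compat_l. apply Rmult_le_pos. nra. lra. lra. }
  assert (K2 : l * (1 - l) * (t - s) * eps <= eps).
  { assert (l * (1 - l) <= 1) by nra. assert (t - s <= 1) by lra.
    assert (l * (1 - l) * (t - s) <= 1). { assert (0 <= l * (1 - l)) by nra. nra. } nra. }
  unfold eps in *. nra.
Qed.

Lemma conc_all : concave_on_01 H.
Proof.
  intros s t l Hs Ht Hl.
  destruct (Req_dec l 0) as [->|Hl0].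
  { replace (0 * s + (1 - 0) * t) with t by ring. lra. }
  destruct (Req_dec l 1) as [->|Hl1].
  { replace (1 * s + (1 - 1) * t) with s by ring. lra. }
  destruct (Rtotal_order s t) as [Hst|[Hst|Hst]].
  - apply conc_main; lra.
  - subst. replace (l * t + (1 - l) * t) with t by ring. lra.
  - pose proof (conc_main t s (1 - l) ltac:(lra) Hst ltac:(lra) ltac:(lra)) as C.
    replace (1 - (1 - l)) with l in C by ring.
    replace (l * s + (1 - l) * t) with ((1 - l) * t + l * s) by ring. lra.
Qed.
End Main.

Theorem theorem2p6
  (f : R -> R -> R) (v : R) (alpha : R -> R)
  (Hsmooth : smooth2 f)
  (Hpos : forall t x, 0 <= t <= 1 -> 0 < f t x)
  (Hprob : forall t, 0 <= t <= 1 -> integral_R (f t) 1)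
  (Halpha_C1 : C1_on_R alpha)
  (Halpha_mono : forall s t, 0 <= s <= 1 -> 0 <= t <= 1 -> s <= t -> alpha s <= alpha t) :
  let g := fun t x => v * f t x + alpha t * px f t x in
  let h := fun t x => v ^ 2 * f t x + 2 * v * alpha t * px f t x
                      + alpha t ^ 2 * px (px f) t x - deriv alpha t * f t x in
  (forall t x, 0 <= t <= 1 -> pt f t x = - px g t x) ->
  (exists thetaA thetaB : R -> R,
      integrable_R thetaA /\ integrable_R thetaB /\
      forall t x, 0 <= t <= 1 ->
        Rabs (px g t x * (1 + ln (f t x))) <= thetaA x /\
        Rabs (px (px h) t x * ln (f t x) + (px g t x) ^ 2 * / f t x) <= thetaB x) ->
  (forall t, 0 <= t <= 1 ->
      vanishes_at_infty (g t) /\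
      vanishes_at_infty (fun x => px h t x * ln (f t x)) /\
      vanishes_at_infty (fun x => h t x / f t x * px f t x) /\
      vanishes_at_infty (fun x => (g t x / f t x) ^ 2 * px f t x)) ->
  (forall t, 0 <= t <= 1 -> integrable_R (fun x => f t x * ln (f t x))) ->
  forall H : R -> R,
    (forall t, 0 <= t <= 1 -> integral_R (fun x => - (f t x * ln (f t x))) (H t)) ->
    concave_on_01 H.

Proof.
  intros g h HPDE [thA [thB [HA [HB Hb]]]] Hv _ H HH.
  exact (conc_all f v alpha Hsmooth Hpos Hprob Halpha_C1 Halpha_mono HPDE thA thB HA HB Hb Hv H HH).
Qed.
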